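(* Let $\Omega=(-1,1)$, let $p,\nu\in\mathbb{N}_0$ with $\nu\le p$, and let $u\in H^{\nu+1}(\Omega)$. Let $q_{p,\nu}\in\Lambda_{p-\nu}^{p+\nu+1}$ be a polynomial with \[ q_{p,\nu}(1)=1,\quad q_{p,\nu}(-1)=0,\quad\text{and}\quad q_{p,\nu}^{(i)}(\pm1)=0\ \text{ for } i=1,\dots,\nu . \] Then \[ \bigl\lvert (u-\pi_p u)^{(\nu)}(\pm1)\bigr\rvert\le\|q_{p,\nu}\|_0\,\lvert u\rvert_{\nu+1}. \]
   Context: $L_j$ denotes the Legendre polynomial of degree $j$ on $(-1,1)$. For integers $i\le j$, $\Lambda_i^j:=\operatorname{span}\{L_i,L_{i+1},\dots,L_j\}$. $\|\cdot\|_0$ is the $L^2(\Omega)$ norm, and $\lvert u\rvert_k:=\|u^{(k)}\|_0$. $H^k(\Omega)$ is the usual Sobolev space. $\pi_p u$ is the $L^2(\Omega)$-orthogonal projection of $u$ onto the polynomials of degree $\le p$. *)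

(* Defs.v *)
From HB Require Import structures.
From mathcomp Require Import all_boot all_order all_algebra.
From mathcomp Require Import all_classical all_reals all_analysis.
Set Implicit Arguments. Unset Strict Implicit. Unset Printing Implicit Defensive.
Import Order.TTheory GRing.Theory Num.Theory.
Import numFieldNormedType.Exports.
Local Open Scope classical_set_scope.
Local Open Scope ring_scope.

Section Defs.
Variable R : realType.
Local Notation mu := (@lebesgue_measure R).

(* Omega = (-1,1); integrals over Omega are taken over [-1,1]
   (the endpoints are Lebesgue-null). *)
Definition Omega : set R := `[-1, 1].

Definition legendre (n : nat) : {poly R} :=
  (2 ^+ n * n`!%:R)^-1 *: ((('X ^+ 2 - 1) ^+ n)^`(n)).

Definition in_Lambda (i j : nat) (q : {poly R}) : Prop :=
  exists c : nat -> R, q = \sum_(i <= k < j.+1) c k *: legendre k.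

Definition L2norm (f : R -> R) : R :=
  Num.sqrt (\int[mu]_(x in Omega) (f x ^+ 2)).

Definition L2fun (f : R -> R) : Prop :=
  measurable_fun Omega f /\
  mu.-integrable Omega (fun x => (f x ^+ 2)%:E).

(* u = U 0 belongs to H^k(Omega), with U j the (continuous-up-to-the-boundary
   representative of the) j-th weak derivative of u, j < k, and U k the k-th
   weak derivative (an L^2 function).  One-dimensional characterization:
   U j is absolutely continuous on [-1,1] with derivative U j.+1, i.e.
   U j x - U j y = int_y^x U j.+1, and U k in L^2(Omega). *)
Definition sobolev_chain (k : nat) (U : nat -> R -> R) : Prop :=
  (forall j, (j <= k)%N -> mu.-integrable Omega (EFin \o U j)) /\
  (forall j, (j < k)%N -> forall x y : R, -1 <= y -> y <= x -> x <= 1 ->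
      U j x - U j y = \int[mu]_(t in `[y, x]) U j.+1 t) /\
  L2fun (U k).

Definition is_L2proj (p : nat) (u : R -> R) (P : {poly R}) : Prop :=
  (size P <= p.+1)%N /\
  forall r : {poly R}, (size r <= p.+1)%N ->
    \int[mu]_(x in Omega) ((u x - P.[x]) * r.[x]) = 0.

End Defs.

(* Main.v *)
Require Import Defs.
From HB Require Import structures.
From mathcomp Require Import all_boot all_order all_algebra.
From mathcomp Require Import all_classical all_reals all_analysis.
From mathcomp Require Import measurable_realfun.
From mathcomp.algebra_tactics Require Import ring lra.
From mathcomp Require Import zify.
Import Order.TTheory GRing.Theory Num.Theory.
Import numFieldNormedType.Exports.
Local Open Scope classical_set_scope.
Local Open Scope ring_scope.


Section S.
Variable R : realType.
Local Notation mu := (@lebesgue_measure R).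

Lemma within_bound (k : R -> R) a b : {within `[a,b], continuous k} ->
  exists M, 0 <= M /\ forall x, a <= x <= b -> `|k x| <= M.
Proof.
move=> ck; have /compact_bounded[M [_ mrt]] := continuous_compact ck (@segment_compact _ a b).
exists (`|M| + 1); split; first by rewrite addr_ge0.
move=> x xab; apply: (mrt (`|M| + 1)).
  by rewrite (le_lt_trans (ler_norm M)) // ltrDl.
by exists x => //=; rewrite in_itv /=.
Qed.

Lemma intMk (g k : R -> R) a b : mu.-integrable `[a,b] (EFin \o g) ->
  {within `[a,b], continuous k} ->
  mu.-integrable `[a,b] (EFin \o (fun x => g x * k x)).
Proof.
move=> ig ck.
have mk : measurable_fun `[a,b] k.
  by apply: subspace_continuous_measurable_fun => //; exact: compact_measurable (@segment_compact _ a b).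
have /compact_bounded[M [_ mrt]] := continuous_compact ck (@segment_compact _ a b).
have bk : [bounded k x | x in `[a,b]].
  exists M; split; rewrite ?num_real //.
  move=> y My x Ax; apply: (mrt y My).
  by exists x.
have H := integrableMl _ ig mk bk.
rewrite (_ : EFin \o _ = ((EFin \o g) \* (EFin \o k))%E).
  exact: H.
by apply/funext => x /=; rewrite EFinM.
Qed.

Lemma poly_cont_within (s : {poly R}) (A : set R) : {within A, continuous (horner s)}.
Proof. apply: continuous_subspaceT => x; exact: continuous_horner. Qed.

Lemma poly_derivable_oo (s : {poly R}) a b : derivable_oo_LRcontinuous (horner s) a b.
Proof.
split.
+ by move=> x _; exact: derivable_horner.
+ by apply: cvg_at_right_filter; exact: continuous_horner.
+ by apply: cvg_at_left_filter; exact: continuous_horner.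
Qed.

Lemma pint_within (k : R -> R) a b : a <= b -> mu.-integrable `[a,b] (EFin \o k) ->
  {within `[a,b], continuous (fun x => \int[mu]_(t in `[a,x]) k t)}.
Proof. by move=> ab ik; exact: (parameterized_integral_continuous ab ik). Qed.

Lemma ibp_cont (a b : R) (phi : R -> R) (h : {poly R}) : a < b ->
  continuous phi -> mu.-integrable `[a,b] (EFin \o phi) ->
  \int[mu]_(x in `[a,b]) (phi x * h.[x]) =
    (\int[mu]_(t in `[a,b]) phi t) * h.[b] -
    \int[mu]_(x in `[a,b]) ((\int[mu]_(t in `[a,x]) phi t) * (h^`()).[x]).
Proof.
move=> ab cphi iphi.
set G := fun x => \int[mu]_(t in `[a,x]) phi t.
have cG := @pint_within phi a b (ltW ab) iphi.
have [_ GL GR] := (continuous_within_itvP _ ab).1 cG.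
have FTC : forall x, x \in `]a, b[ -> derivable G x 1 /\ (G^`())%classic x = phi x.
  move=> x; rewrite in_itv /= => /andP[ax xb].
  exact: (@continuous_FTC1_closed _ phi a x b xb iphi ax (cphi x)).
have D1 : {in `]a, b[, ((horner h)^`())%classic =1 horner h^`()}.
  by move=> x _; rewrite -derivE.
have D2 : derivable_oo_LRcontinuous G a b.
  by split => //; move=> x /FTC [].
have D3 : {in `]a, b[, (G^`())%classic =1 phi} by move=> x /FTC [].
have E := @Rintegration_by_parts _ (horner h) G (horner h^`()) phi a b ab
  (poly_cont_within _ _) (poly_derivable_oo _ _ _) D1 (continuous_subspaceT (fun x => cphi x)) D2 D3.
have G0 : G a = 0 by rewrite /G set_itv1 Rintegral_set1.
rewrite G0 mulr0 subr0 in E.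
transitivity (\int[mu]_(x in `[a,b]) (h.[x] * phi x)).
  by apply: eq_Rintegral => x _; exact: mulrC.
rewrite E mulrC; congr (_ - _); apply: eq_Rintegral => x _; exact: mulrC.
Qed.

Lemma intB a b (k1 k2 : R -> R) :
  mu.-integrable `[a,b] (EFin \o k1) -> mu.-integrable `[a,b] (EFin \o k2) ->
  mu.-integrable `[a,b] (EFin \o (fun x => k1 x - k2 x)).
Proof.
move=> i1 i2; have H := integrableB _ i1 i2.
rewrite (_ : EFin \o _ = ((EFin \o k1) \- (EFin \o k2))%E).
  exact: H.
by apply/funext => x /=; rewrite EFinB.
Qed.

Lemma intS (k : R -> R) a b x y : a <= x -> y <= b ->
  mu.-integrable `[a,b] (EFin \o k) -> mu.-integrable `[x,y] (EFin \o k).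
Proof.
move=> ax yb; apply: integrableS => //.
by apply: subset_itv; rewrite bnd_simp.
Qed.

Lemma cont_int (k : R -> R) a b : {within `[a,b], continuous k} ->
  mu.-integrable `[a,b] (EFin \o k).
Proof. by move=> ck; apply: continuous_compact_integrable => //; exact: segment_compact. Qed.

Lemma Rint_le_sub (k : R -> R) a b x : a <= x -> x <= b ->
  mu.-integrable `[a,b] (EFin \o k) -> (forall t, 0 <= k t) ->
  \int[mu]_(t in `[a,x]) k t <= \int[mu]_(t in `[a,b]) k t.
Proof.
move=> ax xb ik k0.
have := @Rintegral_itvB _ k (BLeft a) (BRight b) x ik.
rewrite !bnd_simp => /(_ ax xb) E.
rewrite -subr_ge0 E; exact: Rintegral_ge0.
Qed.

Lemma mu_itv a b : a <= b -> fine (mu `[a,b]) = b - a.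
Proof.
move=> ab; rewrite lebesgue_measure_itv /= lte_fin.
rewrite le_eqVlt in ab; case/predU1P: ab => [->|ab]; first by rewrite ltxx /= subrr.
by rewrite ab /=.
Qed.

Arguments intS {k a b x y}.
Arguments intB {a b k1 k2}.
Arguments cont_int {k a b}.
Arguments Rint_le_sub {k a b x}.
Arguments intMk {g k a b}.
Arguments pint_within {k a b}.

Lemma cst_within (c : R) (A : set R) : {within A, continuous (fun _ : R => c)}.
Proof. by apply: continuous_subspaceT => x; exact: cvg_cst. Qed.

Lemma ibp_bound (a b : R) (g phi : R -> R) (h : {poly R}) (Mh Mh' : R) : a < b ->
  mu.-integrable `[a,b] (EFin \o g) ->
  continuous phi -> mu.-integrable `[a,b] (EFin \o phi) ->
  0 <= Mh -> (forall x, a <= x <= b -> `|h.[x]| <= Mh) ->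
  0 <= Mh' -> (forall x, a <= x <= b -> `|(h^`()).[x]| <= Mh') ->
  `| \int[mu]_(x in `[a,b]) (g x * h.[x]) -
    ((\int[mu]_(t in `[a,b]) g t) * h.[b] -
    \int[mu]_(x in `[a,b]) ((\int[mu]_(t in `[a,x]) g t) * (h^`()).[x])) |
  <= (Mh + Mh + Mh' * (b - a)) * \int[mu]_(x in `[a,b]) `|g x - phi x|.
Proof.
move=> ab ig cphi iphi Mh0 hM Mh0' hM'.
have ex := @ibp_cont a b phi h ab cphi iphi.
set d := fun x => g x - phi x.
have id : mu.-integrable `[a,b] (EFin \o d) by exact: intB.
set E := \int[mu]_(x in `[a,b]) `|g x - phi x|.
set G := fun k x => \int[mu]_(t in `[a,x]) k t.
have Gd : forall x, a <= x <= b -> G g x - G phi x = G d x.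
  move=> x /andP[ax xb]; rewrite /G RintegralB //; exact: (intS (lexx a) xb).
have GdE : forall x, a <= x <= b -> `|G d x| <= E.
  move=> x /andP[ax xb]; rewrite /G.
  apply: (le_trans (le_normr_Rintegral _ _)) => //; first exact: (intS (lexx a) xb).
  apply: (@Rint_le_sub (fun t => `|d t|) a b x) => //; exact: (integrable_norm id).
have E0 : 0 <= E by apply: Rintegral_ge0.
have cGk : forall k, mu.-integrable `[a,b] (EFin \o k) -> {within `[a,b], continuous (G k)}.
  by move=> k ik; exact: (pint_within (ltW ab) ik).
have ch := poly_cont_within h `[a,b].
have ch' := poly_cont_within h^`() `[a,b].
have e1 : \int[mu]_(x in `[a,b]) (g x * h.[x]) - \int[mu]_(x in `[a,b]) (phi x * h.[x])
    = \int[mu]_(x in `[a,b]) (d x * h.[x]).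
  rewrite -RintegralB //; try exact: intMk.
  by apply: eq_Rintegral => x _; rewrite /d mulrBl.
have e2 : \int[mu]_(x in `[a,b]) (G g x * (h^`()).[x]) - \int[mu]_(x in `[a,b]) (G phi x * (h^`()).[x])
    = \int[mu]_(x in `[a,b]) (G d x * (h^`()).[x]).
  rewrite -RintegralB //; try (apply: intMk => //; apply: cont_int; exact: cGk).
  apply: eq_Rintegral => x; rewrite inE /= in_itv /= => xab.
  by rewrite -mulrBl Gd.
have b1 : `| \int[mu]_(x in `[a,b]) (d x * h.[x]) | <= E * Mh.
  apply: (le_trans (le_normr_Rintegral _ _)) => //; first exact: intMk.
  rewrite /E -RintegralZr //; last exact: (integrable_norm id).
  apply: le_Rintegral => //.
  - exact: (integrable_norm (intMk id ch)).
  - exact: (intMk (integrable_norm id) (cst_within _ _)).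
  - move=> x; rewrite /= in_itv /= => xab.
    by rewrite normrM ler_wpM2l // hM.
have b2 : `| G d b * h.[b] | <= E * Mh.
  rewrite normrM; apply: ler_pM => //; first by apply: GdE; rewrite lexx ltW.
  by apply: hM; rewrite lexx ltW.
have b3 : `| \int[mu]_(x in `[a,b]) (G d x * (h^`()).[x]) | <= E * Mh' * (b - a).
  have iGd : mu.-integrable `[a,b] (EFin \o (fun x => G d x * (h^`()).[x])).
    by apply: intMk => //; apply: cont_int; exact: cGk.
  apply: (le_trans (le_normr_Rintegral _ _)) => //.
  rewrite -(mu_itv _ _ (ltW ab)) -Rintegral_cst //.
  apply: le_Rintegral => //.
  - exact: (integrable_norm iGd).
  - exact: (cont_int (cst_within _ _)).
  - move=> x; rewrite /= in_itv /= => xab.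
    by rewrite normrM ler_pM // ?GdE ?hM'.
have -> : \int[mu]_(x in `[a,b]) (g x * h.[x]) -
    ((\int[mu]_(t in `[a,b]) g t) * h.[b] -
    \int[mu]_(x in `[a,b]) ((\int[mu]_(t in `[a,x]) g t) * (h^`()).[x])) =
   \int[mu]_(x in `[a,b]) (d x * h.[x]) - G d b * h.[b] + \int[mu]_(x in `[a,b]) (G d x * (h^`()).[x]).
  rewrite -e1 -e2 -Gd; last by rewrite lexx ltW.
  rewrite ex /G; ring.
apply: (le_trans (ler_normD _ _)).
apply: (le_trans (lerD (ler_normB _ _) (lexx _))).
have -> : (Mh + Mh + Mh' * (b - a)) * E = E * Mh + E * Mh + E * Mh' * (b - a) by ring.
by apply: lerD => //; apply: lerD.
Qed.

Arguments within_bound {k a b}.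

Lemma ibp_core (a b : R) (g : R -> R) (h : {poly R}) : a < b ->
  mu.-integrable `[a,b] (EFin \o g) ->
  \int[mu]_(x in `[a,b]) (g x * h.[x]) =
    (\int[mu]_(t in `[a,b]) g t) * h.[b] -
    \int[mu]_(x in `[a,b]) ((\int[mu]_(t in `[a,x]) g t) * (h^`()).[x]).
Proof.
move=> ab ig.
have [Mh [Mh0 hM]] := within_bound (poly_cont_within h `[a,b]).
have [Mh' [Mh0' hM']] := within_bound (poly_cont_within h^`() `[a,b]).
set D := \int[mu]_(x in `[a,b]) (g x * h.[x]) -
    ((\int[mu]_(t in `[a,b]) g t) * h.[b] -
    \int[mu]_(x in `[a,b]) ((\int[mu]_(t in `[a,x]) g t) * (h^`()).[x])).
set K := Mh + Mh + Mh' * (b - a).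
have K0 : 0 <= K by rewrite /K !addr_ge0 // mulr_ge0 // subr_ge0 ltW.
have fin : (mu `[a,b] < +oo)%E by rewrite lebesgue_measure_itv /=; case: ifP => _; rewrite ?ltry.
have [g_ [cg ig_ cv]] := @approximation_continuous_integrable R `[a,b] g (measurable_itv _) fin ig.
apply/eqP; rewrite -subr_eq0 -/D; apply/negPn/negP => D0.
have Dp : 0 < `|D| by rewrite normr_gt0.
set e := `|D| / (K + 1).
have e0 : 0 < e by rewrite divr_gt0 // ltr_wpDl.
have [n En] : exists n, (\int[mu]_(z in `[a,b]) `|(g z - g_ n z)%:E| < e%:E)%E.
  case: (pselect (exists n, (\int[mu]_(z in `[a,b]) `|(g z - g_ n z)%:E| < e%:E)%E)) => // /forallNP H.
  have : (e%:E <= 0)%E.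
    apply: (cvge_ge _ cv); apply: nearW => m.
    by rewrite leNgt; apply/negP; exact: H m.
  by rewrite lee_fin leNgt e0.
have En' : \int[mu]_(z in `[a,b]) `|g z - g_ n z| < e.
  move: En; rewrite /Rintegral.
  set X := (\int[mu]_(z in _) _)%E.
  have X0 : (0 <= X)%E by apply: integral_ge0 => x _; exact: abse_ge0.
  by case: X X0 => [r| |] //= _; rewrite lte_fin.
have := @ibp_bound a b g (g_ n) h Mh Mh' ab ig (cg n) (ig_ n) Mh0 hM Mh0' hM'.
rewrite -/D -/K => HD.
have : K * e < `|D|.
  rewrite /e mulrA ltr_pdivrMr ?ltr_wpDl // mulrDr mulr1.
  by rewrite mulrC ltrDl.
move=> Ke; have : K * \int[mu]_(z in `[a,b]) `|g z - g_ n z| <= K * e.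
  by rewrite ler_wpM2l // ltW.
move=> H2; have := le_lt_trans (le_trans HD H2) Ke.
by rewrite ltxx.
Qed.

Lemma poly_FTC (S : {poly R}) a b : a <= b ->
  \int[mu]_(x in `[a, b]) (S^`()).[x] = S.[b] - S.[a].
Proof.
rewrite le_eqVlt => /predU1P[<-|ab].
  by rewrite set_itv1 Rintegral_set1 subrr.
rewrite /Rintegral (@continuous_FTC2 _ _ (horner S)) //.
- exact: poly_cont_within.
- exact: poly_derivable_oo.
- by move=> x _; rewrite -derivE.
Qed.

Lemma ibp_chain (a b : R) (f g : R -> R) (h : {poly R}) : a < b ->
  mu.-integrable `[a,b] (EFin \o g) ->
  (forall x y, a <= y -> y <= x -> x <= b -> f x - f y = \int[mu]_(t in `[y, x]) g t) ->
  \int[mu]_(x in `[a,b]) (g x * h.[x]) =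
    f b * h.[b] - f a * h.[a] - \int[mu]_(x in `[a,b]) (f x * (h^`()).[x]).
Proof.
move=> ab ig hf.
rewrite (@ibp_core a b g h ab ig).
set G := fun x => \int[mu]_(t in `[a,x]) g t.
have cG : {within `[a,b], continuous G} by exact: (pint_within (ltW ab) ig).
have ch' := poly_cont_within h^`() `[a,b].
have -> : \int[mu]_(x in `[a,b]) (f x * (h^`()).[x]) =
    \int[mu]_(x in `[a,b]) (G x * (h^`()).[x] + f a * (h^`()).[x]).
  apply: eq_Rintegral => x; rewrite inE /= in_itv /= => /andP[ax xb].
  by rewrite /G -hf // -mulrDl subrK.
rewrite RintegralD //; last 2 first.
- exact: (intMk (cont_int cG) ch').
- exact: (intMk (cont_int (cst_within _ _)) ch').
rewrite RintegralZl //; last exact: cont_int.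
rewrite poly_FTC ?ltW //.
have -> : \int[mu]_(t in `[a, b]) g t = f b - f a by rewrite hf // ltW.
rewrite /G; ring.
Qed.

Definition chainP (n : nat) (V : nat -> R -> R) : Prop :=
  (forall j, (j <= n)%N -> mu.-integrable `[-1, 1] (EFin \o V j)) /\
  (forall j, (j < n)%N -> forall x y : R, -1 <= y -> y <= x -> x <= 1 ->
      V j x - V j y = \int[mu]_(t in `[y, x]) V j.+1 t).

Lemma chain_ibp n V (h : {poly R}) : chainP n V -> forall m, (m <= n)%N ->
  \int[mu]_(x in `[-1,1]) (V n x * h.[x]) =
  \sum_(0 <= i < m) (-1) ^+ i * (V (n - i.+1)%N 1 * (h^`(i)).[1] - V (n - i.+1)%N (-1) * (h^`(i)).[-1])
  + (-1) ^+ m * \int[mu]_(x in `[-1,1]) (V (n - m)%N x * (h^`(m)).[x]).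
Proof.
move=> [ci cr]; elim=> [_|m IH lemn].
  by rewrite big_geq // add0r expr0 mul1r subn0 derivn0.
rewrite IH; last exact: ltnW.
rewrite big_nat_recr //; rewrite [X in _ = X + _]/=.
have E : (n - m = (n - m.+1).+1)%N by rewrite subnSK.
rewrite E.
rewrite (@ibp_chain (-1) 1 (V (n - m.+1)%N) (V (n - m.+1).+1) h^`(m)).
- rewrite -derivnS exprS; ring.
- lra.
- by apply: ci; rewrite -E leq_subr.
- move=> x y hy hyx hx; apply: cr => //.
  by rewrite ltn_subrL /= (leq_ltn_trans (leq0n m) lemn).
Qed.

End S.


Section S2.
Variable R : realType.
Local Notation mu := (@lebesgue_measure R).

Arguments within_bound {R k a b}.
Arguments intMk {R g k a b}.
Arguments poly_cont_within {R}.
Arguments poly_derivable_oo {R}.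
Arguments pint_within {R k a b}.
Arguments ibp_cont {R}.
Arguments intB {R a b k1 k2}.
Arguments intS {R k a b x y}.
Arguments cont_int {R k a b}.
Arguments Rint_le_sub {R k a b x}.
Arguments mu_itv {R}.
Arguments cst_within {R}.
Arguments ibp_bound {R}.
Arguments ibp_core {R}.
Arguments poly_FTC {R}.
Arguments ibp_chain {R}.
Arguments chainP {R}.
Arguments chain_ibp {R}.

Lemma poly_chain (P : {poly R}) n : chainP n (fun j => horner (P^`(j))).
Proof.
split=> [j _|j _ x y hy hyx hx]; first by apply: cont_int; exact: poly_cont_within.
by rewrite derivnS poly_FTC.
Qed.

Lemma size_derivn_le (s : {poly R}) k : (size (s^`(k)) <= size s - k)%N.
Proof.
elim: k => [|k IH]; first by rewrite subn0.
rewrite derivnS subnS.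
have [->|s0] := eqVneq (s^`(k)) 0; first by rewrite deriv0 size_poly0.
have := lt_size_deriv s0; move: IH.
move: (size (s^`(k))^`()) (size s^`(k)) (size s - k)%N => u v w.
case: w => [|w] /=; first by rewrite leqn0 => /eqP ->.
by move=> vw uv; rewrite -ltnS (leq_trans uv).
Qed.

Lemma sum_bd (W : nat -> R -> R) (q : {poly R}) nu :
  (forall i, (1 <= i <= nu)%N -> (q^`(i)).[1] = 0 /\ (q^`(i)).[-1] = 0) ->
  \sum_(0 <= i < nu.+1) (-1) ^+ i * (W (nu.+1 - i.+1)%N 1 * (q^`(i)).[1] - W (nu.+1 - i.+1)%N (-1) * (q^`(i)).[-1])
  = W nu 1 * q.[1] - W nu (-1) * q.[-1].
Proof.
move=> hqd; rewrite big_ltn // big1_seq ?addr0.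
  by rewrite expr0 mul1r subSS subn0 derivn0.
move=> i /andP[_]; rewrite mem_index_iota => /andP[i1 i2].
have hi : (1 <= i <= nu)%N by rewrite i1 -ltnS.
have [-> ->] := hqd i hi; by rewrite !mulr0 subrr mulr0.
Qed.

Lemma key (p nu : nat) (U : nat -> R -> R) (P q : {poly R}) :
  chainP nu.+1 U -> is_L2proj p (U 0%N) P ->
  (size (q^`(nu.+1)) <= p.+1)%N ->
  (forall r : {poly R}, (size r <= p - nu)%N ->
     \int[mu]_(x in `[-1,1]) (r.[x] * q.[x]) = 0) ->
  (forall i, (1 <= i <= nu)%N -> (q^`(i)).[1] = 0 /\ (q^`(i)).[-1] = 0) ->
  (U nu 1 - (P^`(nu)).[1]) * q.[1] - (U nu (-1) - (P^`(nu)).[-1]) * q.[-1]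
   = \int[mu]_(x in `[-1,1]) (U nu.+1 x * q.[x]).
Proof.
move=> hc [hPs hPo] hqs hqo hqd.
have [cU rU] := hc.
have A := chain_ibp nu.+1 U q hc nu.+1 (leqnn _).
have B := chain_ibp nu.+1 (fun j => horner (P^`(j))) q (poly_chain P nu.+1) nu.+1 (leqnn _).
rewrite (sum_bd U) // subnn in A.
rewrite (sum_bd (fun j => horner (P^`(j)))) // subnn /= -derivnS in B.
have B0 : \int[mu]_(x in `[-1,1]) ((P^`(nu.+1)).[x] * q.[x]) = 0.
  apply: hqo; apply: (leq_trans (size_derivn_le _ _)).
  by rewrite -(subSS nu p) leq_sub2r.
have I0 : \int[mu]_(x in `[-1,1]) (U 0%N x * (q^`(nu.+1)).[x]) =
          \int[mu]_(x in `[-1,1]) (P.[x] * (q^`(nu.+1)).[x]).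
  apply/eqP; rewrite -subr_eq0 -RintegralB //; last 2 first.
  - by apply: intMk; [exact: cU|exact: poly_cont_within].
  - by apply: intMk; [apply: cont_int; exact: poly_cont_within|exact: poly_cont_within].
  rewrite -(hPo _ hqs); apply/eqP; apply: eq_Rintegral => x _; by rewrite mulrBl.
rewrite A; rewrite B0 in B; rewrite I0.
have H : (-1) ^+ nu.+1 * \int[mu]_(x in `[-1,1]) (P.[x] * (q^`(nu.+1)).[x]) =
   - ((P^`(nu)).[1] * q.[1] - (P^`(nu)).[-1] * q.[-1]).
  by apply/eqP; rewrite -addr_eq0 addrC; apply/eqP; rewrite -B.
rewrite H; ring.
Qed.

End S2.


Arguments within_bound {R k a b}.
Arguments intMk {R g k a b}.
Arguments poly_cont_within {R}.
Arguments intB {R a b k1 k2}.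
Arguments intS {R k a b x y}.
Arguments cont_int {R k a b}.
Arguments cst_within {R}.
Arguments poly_FTC {R}.
Arguments chainP {R}.
Arguments chain_ibp {R}.
Arguments poly_chain {R}.
Arguments size_derivn_le {R}.
Arguments key {R}.

Section S4.
Variable R : realType.
Local Notation mu := (@lebesgue_measure R).
Local Notation E := ('X ^+ 2 - 1 : {poly R}).

Lemma A_fact (F : {poly R}) k j : (j <= k)%N -> exists s : {poly R}, ((F ^+ k)^`(j)) = F ^+ (k - j) * s.
Proof.
elim: j => [_|j IH jk]; first by exists 1; rewrite subn0 mulr1.
rewrite derivnS; have [s ->] := IH (ltnW jk).
have km : (k - j = (k - j.+1).+1)%N by rewrite subnSK.
rewrite km derivM deriv_exp /=.
exists (F^`() * s *+ (k - j.+1).+1 + F * s^`()).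
rewrite (exprS F (k - j.+1)); ring.
Qed.

Lemma A_root (F : {poly R}) k j x : F.[x] = 0 -> (j < k)%N -> ((F ^+ k)^`(j)).[x] = 0.
Proof.
move=> Fx jk; have [s ->] := A_fact F k j (ltnW jk).
have kj : (k - j = (k - j.+1).+1)%N by rewrite subnSK.
by rewrite kj hornerM horner_exp Fx expr0n mul0r.
Qed.

Lemma pint2 (s t : {poly R}) : mu.-integrable `[-1,1] (EFin \o (fun x => s.[x] * t.[x])).
Proof. exact: (intMk (cont_int (poly_cont_within s _)) (poly_cont_within t _)). Qed.

Lemma Rint0 (f : R -> R) : (forall x, f x = 0) -> \int[mu]_(x in `[-1,1]) f x = 0.
Proof.
move=> f0; rewrite -(mul0r (fine (mu `[-1,1]))) -Rintegral_cst //.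
by apply: eq_Rintegral => x _; rewrite f0.
Qed.

Lemma legendre_size k : (size (legendre R k) <= k.+1)%N.
Proof.
rewrite /legendre; apply: leq_trans (size_scale_leq _ _) _.
apply: leq_trans (size_derivn_le _ _) _.
have sE : size E = 3%N by rewrite -polyC1 size_XnsubC.
have := size_poly_exp_leq E k; rewrite sE /= => H.
have := leq_sub2r k H; move=> H2; apply: leq_trans H2 _; lia.
Qed.

Lemma legendre_orth k (r : {poly R}) : (size r <= k)%N ->
  \int[mu]_(x in `[-1,1]) (r.[x] * (legendre R k).[x]) = 0.
Proof.
move=> rk; rewrite /legendre.
set c := (2 ^+ k * k`!%:R)^-1.
set A := E ^+ k.
transitivity (c * \int[mu]_(x in `[-1,1]) ((A^`(k)).[x] * r.[x])).
  rewrite -RintegralZl //; last exact: pint2.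
  by apply: eq_Rintegral => x _; rewrite hornerZ; ring.
rewrite (chain_ibp k (fun j => horner (A^`(j))) r (poly_chain A k) k (leqnn k)) subnn /=.
rewrite (derivn_poly0 rk) Rint0; last by move=> x; rewrite horner0 mulr0.
rewrite mulr0 addr0 big1_seq ?mulr0 //.
move=> i /andP[_]; rewrite mem_index_iota => /andP[_ ik].
have E1 : E.[1] = 0 by rewrite !hornerE; ring.
have Em1 : E.[-1] = 0 by rewrite !hornerE; ring.
have kk : (k - i.+1 < k)%N by lia.
by rewrite (A_root E k _ 1 E1 kk) (A_root E k _ (-1) Em1 kk); ring.
Qed.

Lemma Lambda_props (p nu : nat) (q : {poly R}) : in_Lambda (p - nu) (p + nu + 1) q ->
  and (size q <= p + nu + 2)%N
  (forall r : {poly R}, (size r <= p - nu)%N -> \int[mu]_(x in `[-1,1]) (r.[x] * q.[x]) = 0).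
Proof.
case=> c ->; split.
  rewrite big_seq; apply: (big_ind (fun s : {poly R} => (size s <= p + nu + 2)%N)).
  - by rewrite size_poly0.
  - by move=> s t hs ht; apply: leq_trans (size_polyD _ _) _; rewrite geq_max hs ht.
  - move=> i; rewrite mem_index_iota => /andP[_ hi].
    apply: leq_trans (size_scale_leq _ _) _; apply: leq_trans (legendre_size i) _; lia.
move=> r hr.
rewrite big_seq; apply: (big_ind (fun s : {poly R} => \int[mu]_(x in `[-1,1]) (r.[x] * s.[x]) = 0)).
- by rewrite Rint0 // => x; rewrite horner0 mulr0.
- move=> s t hs ht.
  transitivity (\int[mu]_(x in `[-1,1]) (r.[x] * s.[x]) + \int[mu]_(x in `[-1,1]) (r.[x] * t.[x])).
    rewrite -RintegralD //; try exact: pint2.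
    by apply: eq_Rintegral => x _; rewrite hornerD mulrDr.
  by rewrite hs ht addr0.
- move=> i; rewrite mem_index_iota => /andP[hi _].
  transitivity (c i * \int[mu]_(x in `[-1,1]) (r.[x] * (legendre R i).[x])).
    rewrite -RintegralZl //; last exact: pint2.
    by apply: eq_Rintegral => x _; rewrite hornerZ; ring.
  by rewrite legendre_orth ?mulr0 //; lia.
Qed.

End S4.


Arguments intMk {R g k a b}.
Arguments poly_cont_within {R}.
Arguments cont_int {R k a b}.
Arguments pint2 {R}.
Arguments intB {R a b k1 k2}.

Section S5.
Variable R : realType.
Local Notation mu := (@lebesgue_measure R).

Lemma refl_int (s : {poly R}) :
  \int[mu]_(x in `[-1,1]) (s \Po (- 'X)).[x] = \int[mu]_(x in `[-1,1]) s.[x].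
Proof.
have := @integration_by_substitution_oppr R (horner s) (-1) 1 _ (poly_cont_within s _).
rewrite opprK => /(_ _) H.
rewrite /Rintegral H; last lra.
by congr fine; apply: eq_integral => x _ /=; rewrite horner_comp !hornerE.
Qed.

Lemma compN_derivn (s : {poly R}) i :
  (s \Po (- 'X))^`(i) = (-1) ^+ i *: (s^`(i) \Po (- 'X)).
Proof.
elim: i => [|i IH]; first by rewrite expr0 scale1r.
rewrite derivnS IH derivZ deriv_comp derivN derivX exprS.
by rewrite -derivnS mulrN1 mulN1r scaleNr scalerN.
Qed.

Lemma size_compN (s : {poly R}) : size (s \Po (- 'X)) = size s.
Proof. by rewrite size_comp_poly2 // size_polyN size_polyX. Qed.

Lemma alg_cs (a b c : R) : 0 <= a -> 0 <= b ->
  (forall t, 0 <= t ^+ 2 * a - 2 * t * c + b) -> c ^+ 2 <= a * b.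
Proof.
move=> a0 b0 H.
have [az|an0] := eqVneq a 0.
  rewrite az in H *.
  have [c0|cn0] := eqVneq c 0; first by rewrite c0 expr0n /= mul0r.
  have := H ((b + 1) / (2 * c)).
  have -> : ((b + 1) / (2 * c)) ^+ 2 * 0 - 2 * ((b + 1) / (2 * c)) * c + b = -1.
    by field.
  by rewrite ler0N1.
have ap : 0 < a by rewrite lt_neqAle eq_sym an0 a0.
have := H (c / a).
have -> : (c / a) ^+ 2 * a - 2 * (c / a) * c + b = b - c ^+ 2 / a by field.
rewrite subr_ge0 ler_pdivrMr // => h; by rewrite mulrC.
Qed.

Lemma intZ (f : R -> R) (r : R) : mu.-integrable `[-1,1] (EFin \o f) ->
  mu.-integrable `[-1,1] (EFin \o (fun x => r * f x)).
Proof.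
move=> i; have H := integrableZl _ r i.
rewrite (_ : EFin \o _ = (fun x => r%:E * (EFin \o f) x)%E).
  exact: H.
by apply/funext => x /=; rewrite EFinM.
Qed.

Lemma intD (k1 k2 : R -> R) :
  mu.-integrable `[-1,1] (EFin \o k1) -> mu.-integrable `[-1,1] (EFin \o k2) ->
  mu.-integrable `[-1,1] (EFin \o (fun x => k1 x + k2 x)).
Proof.
move=> i1 i2; have H := integrableD _ i1 i2.
rewrite (_ : EFin \o _ = ((EFin \o k1) \+ (EFin \o k2))%E).
  exact: H.
by apply/funext => x /=; rewrite EFinD.
Qed.

Lemma CS (q : {poly R}) (k : R -> R) :
  mu.-integrable `[-1,1] (EFin \o k) ->
  mu.-integrable `[-1,1] (EFin \o (fun x => k x ^+ 2)) ->
  `|\int[mu]_(x in `[-1,1]) (k x * q.[x])| <=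
   Num.sqrt (\int[mu]_(x in `[-1,1]) (q.[x] ^+ 2)) * Num.sqrt (\int[mu]_(x in `[-1,1]) (k x ^+ 2)).
Proof.
move=> ik ik2.
set a := \int[mu]_(x in `[-1,1]) (q.[x] ^+ 2).
set b := \int[mu]_(x in `[-1,1]) (k x ^+ 2).
set c := \int[mu]_(x in `[-1,1]) (k x * q.[x]).
have iq2 : mu.-integrable `[-1,1] (EFin \o (fun x => q.[x] ^+ 2)) by exact: (pint2 q q).
have ikq : mu.-integrable `[-1,1] (EFin \o (fun x => k x * q.[x])) by exact: (intMk ik (poly_cont_within q _)).
have a0 : 0 <= a by apply: Rintegral_ge0 => x _; exact: sqr_ge0.
have b0 : 0 <= b by apply: Rintegral_ge0 => x _; exact: sqr_ge0.
have H : forall t, 0 <= t ^+ 2 * a - 2 * t * c + b.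
  move=> t.
  have -> : t ^+ 2 * a - 2 * t * c + b =
      \int[mu]_(x in `[-1,1]) (t ^+ 2 * q.[x] ^+ 2 + ((- (2 * t)) * (k x * q.[x]) + k x ^+ 2)).
    rewrite RintegralD //; last by apply: intD; [exact: intZ|exact: ik2].
      rewrite RintegralD //; last exact: intZ.
      by rewrite !RintegralZl // /a /b /c; ring.
    exact: intZ.
  by apply: Rintegral_ge0 => x _; rewrite (_ : _ + _ = (t * q.[x] - k x) ^+ 2) ?sqr_ge0 //; ring.
have := alg_cs _ _ _ a0 b0 H.
rewrite -sqrtrM // -sqrtr_sqr ler_sqrt //; exact: mulr_ge0.
Qed.

End S5.

Arguments chainP {R}.
Arguments Lambda_props {R}.
Arguments CS {R}.
Arguments key {R}.
Arguments size_derivn_le {R}.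
Arguments refl_int {R}.
Arguments compN_derivn {R}.
Arguments size_compN {R}.

Lemma qN_eval (R : realType) (s : {poly R}) x : (s \Po (- 'X)).[x] = s.[- x].
Proof. by rewrite horner_comp hornerN hornerX. Qed.

Theorem lemma5 (R : realType) (p nu : nat) (hnu : (nu <= p)%N)
  (U : nat -> R -> R) (hU : sobolev_chain nu.+1 U)
  (q : {poly R}) (hqL : in_Lambda (p - nu) (p + nu + 1) q)
  (hq1 : q.[1] = 1) (hqm1 : q.[-1] = 0)
  (hqd : forall i : nat, (1 <= i <= nu)%N ->
           (q^`(i)).[1] = 0 /\ (q^`(i)).[-1] = 0)
  (P : {poly R}) (hP : is_L2proj p (U 0%N) P) :
  `| U nu 1 - (P^`(nu)).[1] | <= L2norm (fun x => q.[x]) * L2norm (U nu.+1) /\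
  `| U nu (-1) - (P^`(nu)).[-1] | <= L2norm (fun x => q.[x]) * L2norm (U nu.+1).
Proof.
have [hi [hr hL2]] := hU.
have hc : chainP nu.+1 U by split; [exact: hi|exact: hr].
have [hsz hor] := Lambda_props p nu q hqL.
have [_ hL2i] := hL2.
have cs := fun s : {poly R} => CS s (U nu.+1) (hi nu.+1 (leqnn _)) hL2i.
split.
  have k1 := key p nu U P q hc hP.
  rewrite hq1 hqm1 mulr1 mulr0 subr0 in k1.
  rewrite k1 //; first exact: cs.
  apply: leq_trans (size_derivn_le _ _) _; lia.
set qt := q \Po (- 'X).
have hor' : forall r : {poly R}, (size r <= p - nu)%N ->
    \int[lebesgue_measure]_(x in `[-1,1]) (r.[x] * qt.[x]) = 0.
  move=> r hr'.
  rewrite -(hor (r \Po (- 'X))) ?size_compN //.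
  transitivity (\int[lebesgue_measure]_(x in `[-1,1]) ((((r \Po (- 'X)) * q) \Po (- 'X)).[x])).
    by apply: eq_Rintegral => x _; rewrite qN_eval hornerM !qN_eval opprK.
  rewrite refl_int; apply: eq_Rintegral => x _; by rewrite hornerM.
have hqd' : forall i : nat, (1 <= i <= nu)%N -> (qt^`(i)).[1] = 0 /\ (qt^`(i)).[-1] = 0.
  move=> i hi'; have [h1 h2] := hqd i hi'.
  by rewrite /qt compN_derivn !hornerZ !qN_eval opprK h1 h2 !mulr0.
have k2 := key p nu U P qt hc hP.
rewrite /qt !qN_eval opprK hq1 hqm1 -/qt mulr1 mulr0 sub0r in k2.
rewrite -normrN.
rewrite k2 //.
- have -> : L2norm (fun x => q.[x]) = Num.sqrt (\int[lebesgue_measure]_(x in `[-1,1]) (qt.[x] ^+ 2)).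
    rewrite /L2norm /Omega; congr Num.sqrt.
    transitivity (\int[lebesgue_measure]_(x in `[-1,1]) ((q ^+ 2).[x])).
      by apply: eq_Rintegral => x _; rewrite horner_exp.
    rewrite -refl_int; apply: eq_Rintegral => x _.
    by rewrite qN_eval horner_exp /qt qN_eval.
  exact: cs.
- apply: leq_trans (size_derivn_le _ _) _; rewrite size_compN; lia.
Qed.
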